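(* Let $\{F_n\}_{n\geq 0}$ be a sequence of positive integers with $F_0=1$, let $\Pi$ be the cobweb poset it determines, and for $n\ge 0$ let $\chi_n(t)=\sum_{x\in P_n}\mu(0,x)\,t^{n-r(x)}$ be the characteristic polynomial of the finite cobweb subposet $P_n$. Then $$\chi_0(t)=1,\qquad \chi_1(t)=t-F_1,$$ and for $n\geq 2$, $$\chi_n(t)=t\,\chi_{n-1}(t)+(-1)^nF_n(F_{n-1}-1)(F_{n-2}-1)\cdots(F_1-1).$$
   Context: Cobweb poset: given the sequence $\{F_n\}_{n\ge 0}$, for $s\geq 0$ let the $s$-th level be $\Phi_s=\{\langle j,s\rangle : 1\leq j\leq F_s\}$, and let $V=\bigcup_{s\geq 0}\Phi_s$. The cobweb poset is $\Pi=(V,\leq)$ where for $x=\langle s,t\rangle$, $y=\langle u,v\rangle$ one has $x\leq y$ iff ($t<v$) or ($t=v$ and $s=u$). Its rank function is $r(x)=s$ for $x\in\Phi_s$. For $n\geq 0$, $P_n$ is the set $\bigcup_{0\leq s\leq n}\Phi_s$ with the induced order; it has unique minimal element $0=\langle 1,0\rangle$. $\mu$ denotes the M\''obius function of $P_n$. *)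

(* Defs.v *)
From HB Require Import structures.
From mathcomp Require Import all_boot all_order all_algebra.
Set Implicit Arguments. Unset Strict Implicit. Unset Printing Implicit Defensive.
Import Order.TTheory GRing.Theory Num.Theory.
Local Open Scope ring_scope.

(* The recursion is run with fuel #|T|, which
   is enough since every strict chain in T has at most #|T| elements. *)
Fixpoint mobius_fuel (T : finType) (le : rel T) (k : nat) (x y : T) : int :=
  match k with
  | 0 => 0
  | k'.+1 =>
      if x == y then 1
      else if le x y then
        - \sum_(z : T | le x z && le z y && (z != y)) mobius_fuel le k' x z
      else 0
  end.

Definition mobius (T : finType) (le : rel T) (x y : T) : int :=
  mobius_fuel le #|T| x y.

(* The finite cobweb subposet P_n: elements <j,s> with 0 <= s <= n and
   j ranging over 'I_(F s) (0-based, i.e. j+1 in {1..F s}). *)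
Definition cobweb (F : nat -> nat) (n : nat) : finType :=
  {s : 'I_n.+1 & 'I_(F s)}.

Definition cobweb_rank (F : nat -> nat) (n : nat) (x : cobweb F n) : nat :=
  val (tag x).

Definition cobweb_le (F : nat -> nat) (n : nat) : rel (cobweb F n) :=
  fun x y => (cobweb_rank x < cobweb_rank y)%N || (x == y).

Definition cobweb_zero (F : nat -> nat) (n : nat) (h : (0 < F 0)%N)
  : cobweb F n :=
  @Tagged _ (@ord0 n) (fun s : 'I_n.+1 => 'I_(F s)) (Ordinal h).

Definition cobweb_charpoly (F : nat -> nat) (n : nat) (h : (0 < F 0)%N)
  : {poly int} :=
  \sum_(x : cobweb F n)
     (mobius (@cobweb_le F n) (cobweb_zero n h) x)%:P * 'X^(n - cobweb_rank x).

(* Main.v *)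
Require Import Defs.
From HB Require Import structures.
From mathcomp Require Import all_boot all_order all_algebra ring.
Import Order.TTheory GRing.Theory Num.Theory.
Local Open Scope ring_scope.

Section S.
Variable F : nat -> nat.

Lemma sum_rank (R : nmodType) n (Q : pred nat) (g : nat -> R) :
  \sum_(x : cobweb F n | Q (cobweb_rank x)) g (cobweb_rank x)
  = \sum_(s < n.+1 | Q s) g s *+ F s.
Proof.
rewrite (partition_big (fun x : cobweb F n => tag x) (fun s : 'I_n.+1 => Q s)) //=.
apply: eq_bigr => s Qs.
transitivity (\sum_(x : cobweb F n | tag x == s) g s).
  apply: eq_big => x.
    case: eqP => [e|]; last by rewrite andbF.
    by rewrite andbT /cobweb_rank e.
  by move=> /andP[_ /eqP <-].
have := big_tag (op := +%R) (idx := (0:R)) (T_ := fun i : 'I_n.+1 => 'I_(F i)) (fun i _ => g s) s.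
move=> H; rewrite sumr_const card_ord in H; rewrite H.
apply: eq_big => x //.
rewrite /untag /=.
case: eqP => // e.
Qed.

Definition m (s : nat) : int := (-1) ^+ s * \prod_(1 <= i < s) ((F i)%:Z - 1).

Lemma sumM s : (F 0 = 1)%N -> \sum_(r < s.+1) m r *+ F r = (-1) ^+ s * \prod_(1 <= i < s.+1) ((F i)%:Z - 1).
Proof.
move=> F0; elim: s => [|s IH].
  by rewrite big_ord1 /m F0 !big_geq.
rewrite big_ord_recr /= IH /m [in RHS]big_nat_recr //= exprS.
rewrite -mulr_natr natz.
by ring.
Qed.

Lemma mrec s : (0 < s)%N -> (F 0 = 1)%N -> m s = - \sum_(r < s) m r *+ F r.
Proof.
case: s => // s _ F0.
by rewrite sumM // /m exprS mulN1r mulNr.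
Qed.


Hypothesis F0 : F 0 = 1%N.

Lemma rank0 n (h : (0 < F 0)%N) (z : cobweb F n) :
  cobweb_rank z = 0%N -> z = cobweb_zero n h.
Proof.
case: z => s j /= e.
have es : s = ord0 by apply: val_inj.
subst s; rewrite /cobweb_zero; congr Tagged; apply: val_inj => /=.
have hj : (nat_of_ord j < 1)%N by rewrite -[1%N]F0; exact: ltn_ord j.
by move: (nat_of_ord j) hj => [|].
Qed.

Lemma mob n (h : (0 < F 0)%N) k (y : cobweb F n) :
  (cobweb_rank y < k)%N ->
  mobius_fuel (@cobweb_le F n) k (cobweb_zero n h) y = m (cobweb_rank y).
Proof.
elim: k y => // k IH y lty /=.
case: eqP => [<-|ne]; first by rewrite /m big_geq.
have ry : (0 < cobweb_rank y)%N.
  rewrite lt0n; apply/eqP => e; apply: ne; symmetry; exact: rank0.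
rewrite /cobweb_le {1}/cobweb_rank /= ry /=.
rewrite (@mrec _ ry F0).
congr (- _).
transitivity (\sum_(z : cobweb F n | (cobweb_rank z < cobweb_rank y)%N) m (cobweb_rank z)).
  apply: eq_big => z.
    case: (ltnP (cobweb_rank z) (cobweb_rank y)) => hz.
      rewrite orTb (_ : z != y) ?andbT.
        rewrite (_ : cobweb_rank (cobweb_zero n h) = 0%N) //.
        rewrite lt0n; case: eqP => /= z0 //.
        by rewrite (@rank0 n h z z0) eqxx.
      by apply/eqP => e; move: hz; rewrite e ltnn.
    by rewrite /=; case: (z == y); rewrite ?andbF.
  move=> /andP[/andP[_ hz] nz]; apply: IH.
  move: hz; rewrite (negbTE nz) orbF => hz.
  exact: leq_trans hz lty.
rewrite (@sum_rank _ n (fun s => (s < cobweb_rank y)%N) m).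
have yn : (cobweb_rank y <= n)%N by rewrite /cobweb_rank -ltnS ltn_ord.
by rewrite (big_ord_widen_cond n.+1 xpredT (fun r => m r *+ F r) (ltnW (leq_ltn_trans yn (ltnSn n)))).
Qed.


Definition chi n : {poly int} := \sum_(s < n.+1) ((m s)%:P * 'X^(n - s)) *+ F s.

Hypothesis Fpos : forall k, (0 < F k)%N.

Lemma card_cob n : (n < #|cobweb F n|)%N.
Proof.
have inj : injective (fun s : 'I_n.+1 => Tagged (fun s : 'I_n.+1 => 'I_(F s)) (Ordinal (Fpos s))).
  by move=> s t /(congr1 tag).
by have := leq_card _ inj; rewrite card_ord.
Qed.

Lemma charpoly_chi n h : @cobweb_charpoly F n h = chi n.
Proof.
rewrite /cobweb_charpoly.
transitivity (\sum_(x : cobweb F n) (m (cobweb_rank x))%:P * 'X^(n - cobweb_rank x)).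
  apply: eq_bigr => x _; rewrite /mobius mob //.
  apply: leq_ltn_trans (card_cob n).
  by rewrite /cobweb_rank -ltnS ltn_ord.
exact: (@sum_rank _ n xpredT (fun s => (m s)%:P * 'X^(n - s))).
Qed.

Lemma chi_rec n : chi n.+1 = 'X * chi n + ((m n.+1) *+ F n.+1)%:P.
Proof.
rewrite /chi big_ord_recr /= subnn expr0 mulr1 polyCMn; congr (_ + _).
rewrite mulr_sumr; apply: eq_bigr => i _.
rewrite mulrnAr; congr (_ *+ _).
rewrite subSn; last by rewrite -ltnS ltn_ord.
by rewrite exprS mulrCA.
Qed.

End S.

Theorem mainTheorem4 (F : nat -> nat) (Fpos : forall k, (0 < F k)%N)
    (F0 : F 0%N = 1%N) :
  cobweb_charpoly 0 (Fpos 0%N) = 1 /\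
  cobweb_charpoly 1 (Fpos 0%N) = 'X - ((F 1%N)%:Z)%:P /\
  (forall n : nat, (2 <= n)%N ->
     cobweb_charpoly n (Fpos 0%N) =
       'X * cobweb_charpoly n.-1 (Fpos 0%N)
       + ((-1) ^+ n * (F n)%:Z * \prod_(1 <= i < n) ((F i)%:Z - 1))%:P).
Proof.
have c0 : chi F 0 = 1.
  by rewrite /chi big_ord1 /m subnn expr0 mulr1 F0 big_geq.
split; first by rewrite (@charpoly_chi F F0 Fpos) c0.
split.
  rewrite (@charpoly_chi F F0 Fpos) chi_rec c0 mulr1 /m big_geq // expr1 mulr1.
  by rewrite -mulr_natr natz mulN1r polyCN.
case=> // n _; rewrite !(@charpoly_chi F F0 Fpos) chi_rec /=.
by rewrite /m -mulr_natr natz mulrAC.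
Qed.
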